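(* Let $I\subset\mathbb{K}[x_1,\ldots,x_n]$ be a zero-dimensional ideal of degree $D$ in shape position, with Gröbner basis $G_1$ w.r.t. a term ordering $<_1$, multiplication matrix $T_1$ (assumed nonsingular) and $\mathbf{e}=(1,0,\ldots,0)^t\in\mathbb{K}^D$. Let $\mathbf{w}\in\mathbb{K}^D$, and let $\tilde f_1$ be the minimal polynomial, of degree $d$, of the scalar sequence $(\langle\mathbf{w},T_1^i\mathbf{e}\rangle)_{i=0}^{2D-1}$. Let $\tilde T_1$ be the multiplication matrix of $x_1$ for the ideal $I+\langle\tilde f_1\rangle$ w.r.t. $<_1$, and let $\tilde{\mathbf{e}}=(1,0,\ldots,0)^t\in\mathbb{K}^{d}$ be the coordinate vector of $1$ in $\mathbb{K}[x_1,\ldots,x_n]/(I+\langle\tilde f_1\rangle)$. Then $\tilde f_1$ is also the minimal polynomial of the vector sequence $[\tilde{\mathbf{e}},\tilde T_1\tilde{\mathbf{e}},\tilde T_1^2\tilde{\mathbf{e}},\ldots]$.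
   Context: Variables are ordered $x_1<\cdots<x_n$. For a zero-dimensional ideal $J$ with Gröbner basis w.r.t. $<_1$, let $B=[\epsilon_1,\ldots,\epsilon_m]$ be the canonical basis (standard monomials) of the quotient ring, ordered increasingly by $<_1$, so that $\epsilon_1=1$. The multiplication matrix of $x_i$ is the $m\times m$ matrix whose $j$-th column is the coordinate vector, in $B$, of the normal form of $\epsilon_j x_i$. $I$ is in shape position if its reduced Gröbner basis w.r.t. LEX is $[f_1(x_1),x_2-f_2(x_1),\ldots,x_n-f_n(x_1)]$; then $\deg f_1=D$. The minimal polynomial of a scalar linearly recurring sequence is the monic generator of its ideal of characteristic polynomials. The minimal polynomial of a vector sequence $(A^i\mathbf{v})_{i\ge0}$ is the monic polynomial $p$ of least degree with $p(A)\mathbf{v}=0$. *)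

(* Defs.v *)
From HB Require Import structures.
From mathcomp Require Import all_boot all_order all_algebra.
From mathcomp Require Import mpoly.
Set Implicit Arguments. Unset Strict Implicit. Unset Printing Implicit Defensive.
Import Order.TTheory GRing.Theory.
Local Open Scope ring_scope.

Section Defs.
Variables (K : fieldType) (n : nat).
Local Notation M := ('X_{1..n}).
Local Notation P := ({mpoly K[n]}).

Definition is_ideal (I : P -> Prop) : Prop :=
  [/\ I 0,
      (forall p q, I p -> I q -> I (p + q)) &
      (forall p q, I q -> I (p * q))].

Definition ideal_gen (G : seq P) (p : P) : Prop :=
  exists c : 'I_(size G) -> P, p = \sum_(i < size G) c i * G`_i.

Definition term_order (lt : rel M) : Prop :=
  [/\ irreflexive lt, transitive lt,
      (forall a b, a != b -> lt a b || lt b a),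
      (forall a b c, lt a b -> lt (a + c)%MM (b + c)%MM) &
      (forall a, a != 0%MM -> lt 0%MM a)].

Definition is_lm (lt : rel M) (f : P) (m : M) : Prop :=
  m \in msupp f /\ (forall m', m' \in msupp f -> m' != m -> lt m' m).

Definition standard (lt : rel M) (I : P -> Prop) (m : M) : Prop :=
  ~ (exists f, [/\ I f, f != 0 & is_lm lt f m]).

(* B is the canonical basis of K[x]/I: the list of standard monomials,
   sorted increasingly w.r.t. lt.  Its existence (as a finite list)
   expresses zero-dimensionality, and size B is the degree of I. *)
Definition canonical_basis (lt : rel M) (I : P -> Prop) (B : seq M) : Prop :=
  sorted lt B /\ (forall m, m \in B <-> standard lt I m).

(* T is the multiplication matrix of g in K[x]/I w.r.t. the basis B:
   its j-th column is the coordinate vector (in B) of the normal form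
   of eps_j * g. *)
Definition mult_matrix (I : P -> Prop) (B : seq M) (g : P)
    (T : 'M[K]_(size B)) : Prop :=
  forall j : 'I_(size B),
    I ('X_[nth 0%MM B j] * g - \sum_(k < size B) T k j *: 'X_[nth 0%MM B k]).

Definition reduced_groebner (lt : rel M) (I : P -> Prop) (G : seq P) : Prop :=
  [/\ (forall p, I p <-> ideal_gen G p),
      (forall i : 'I_(size G), exists m, is_lm lt G`_i m /\ G`_i@_m = 1),
      (forall f, I f -> f != 0 -> exists (i : 'I_(size G)) m mf,
          [/\ is_lm lt G`_i m, is_lm lt f mf & (m <= mf)%MM]) &
      (forall (i j : 'I_(size G)) m, i != j -> is_lm lt G`_j m ->
          forall t, t \in msupp G`_i -> ~~ (m <= t)%MM)].

End Defs.
Arguments mult_matrix {K n} I B g T.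

Definition poly_x1 (K : fieldType) (n : nat) (p : {poly K}) : {mpoly K[n.+1]} :=
  \sum_(i < size p) p`_i *: 'X_ord0 ^+ i.

(* LEX order with x_1 < x_2 < ... < x_n (variable x_i is index i-1) *)
Definition lexlt (n : nat) : rel 'X_{1..n} :=
  fun a b => [exists k : 'I_n, (a k < b k)%N &&
                               [forall j : 'I_n, (k < j)%N ==> (a j == b j)]].

Definition shape_position (K : fieldType) (n : nat)
    (I : {mpoly K[n.+1]} -> Prop) : Prop :=
  exists f : 'I_n.+1 -> {poly K},
    reduced_groebner (@lexlt n.+1) I
      [seq (if i == ord0 then poly_x1 n (f i)
            else 'X_i - poly_x1 n (f i)) | i <- enum 'I_n.+1].

Definition ideal_add1 (K : fieldType) (n : nat) (I : {mpoly K[n]} -> Prop)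
    (g : {mpoly K[n]}) : {mpoly K[n]} -> Prop :=
  fun p => exists a b, I a /\ p = a + b * g.

Definition e1 (K : fieldType) (m : nat) : 'cV[K]_m :=
  \col_(i < m) (if (i == 0 :> nat) then 1 else 0).

Definition char_poly_seq (K : fieldType) (s : nat -> K) (q : {poly K}) : Prop :=
  forall i, \sum_(k < size q) q`_k * s (i + k)%N = 0.

Definition min_poly_seq (K : fieldType) (s : nat -> K) (p : {poly K}) : Prop :=
  p \is monic /\ (forall q, char_poly_seq s q <-> p %| q).

Definition poly_mx (K : fieldType) (m : nat) (A : 'M[K]_m) (p : {poly K}) : 'M[K]_m :=
  \sum_(k < size p) p`_k *: A ^+ k.

Definition min_poly_vec (K : fieldType) (m : nat) (A : 'M[K]_m) (v : 'cV[K]_m)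
    (p : {poly K}) : Prop :=
  [/\ p \is monic, poly_mx A p *m v = 0 &
      (forall q, q \is monic -> poly_mx A q *m v = 0 -> (size p <= size q)%N)].

(* Main.v *)
From HB Require Import structures.
From mathcomp Require Import all_boot all_order all_algebra.
From mathcomp Require Import mpoly.
Require Import Defs.
From Stdlib Require Import Classical.
Set Implicit Arguments. Unset Strict Implicit. Unset Printing Implicit Defensive.
Import GRing.Theory.
Local Open Scope ring_scope.

Section Gen.
Variables (K : fieldType) (n : nat).
Local Notation M := ('X_{1..n.+1}).
Local Notation P := ({mpoly K[n.+1]}).
Variables (I : P -> Prop) (lt : rel M).
Hypothesis HI : is_ideal I.
Hypothesis Hlt : term_order lt.

Lemma I0 : I 0. Proof. by case: HI. Qed.
Lemma ID p q : I p -> I q -> I (p + q). Proof. by case: HI => _ h _; apply: h. Qed.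
Lemma IM p q : I q -> I (p * q). Proof. by case: HI => _ _ h; apply: h. Qed.
Lemma IMr p q : I p -> I (p * q). Proof. by rewrite mulrC; apply: IM. Qed.
Lemma IZ (a : K) p : I p -> I (a *: p).
Proof. by rewrite -mul_mpolyC; apply: IM. Qed.
Lemma IN p : I p -> I (- p).
Proof. by move=> h; rewrite -scaleN1r; apply: IZ. Qed.
Lemma IB p q : I p -> I q -> I (p - q).
Proof. by move=> hp hq; apply: ID => //; apply: IN. Qed.
Lemma Isum (m : nat) (F : 'I_m -> P) : (forall i, I (F i)) -> I (\sum_(i < m) F i).
Proof.
move=> h; elim/big_ind: _ => //; [exact: I0 | exact: ID].
Qed.

Lemma seq_max (s : seq M) : s != [::] ->
  exists2 x, x \in s & forall y, y \in s -> y != x -> lt y x.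
Proof.
case: Hlt => irr tr tot _ _.
elim: s => [//|a s IH] _.
case: (eqVneq s [::]) => [->|sn].
  exists a; first by rewrite inE eqxx.
  by move=> y; rewrite mem_seq1 => /eqP ->; rewrite eqxx.
have [x xs hx] := IH sn.
case: (eqVneq a x) => [ax|ax].
  exists x; first by rewrite inE xs orbT.
  by move=> y; rewrite inE => /orP [/eqP->|ys] yx; [rewrite ax eqxx in yx|apply: hx].
have /orP [ltax|ltxa] := tot _ _ ax.
  exists x; first by rewrite inE xs orbT.
  by move=> y; rewrite inE => /orP [/eqP->|ys] yx //; apply: hx.
exists a; first by rewrite inE eqxx.
move=> y; rewrite inE => /orP [/eqP->|ys] ya; first by rewrite eqxx in ya.
case: (eqVneq y x) => [->//|yx]; exact: tr (hx _ ys yx) ltxa.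
Qed.

Lemma lm_exists (f : P) : f != 0 -> exists m, is_lm lt f m.
Proof.
move=> f0; have : msupp f != [::] by rewrite msupp_eq0.
by case/seq_max => m h1 h2; exists m.
Qed.

Lemma one_in_I : ~ standard lt I 0%MM -> I 1.
Proof.
case: Hlt => irr tr tot _ pos.
move=> /NNPP [f [If f0 [lm0 hlm]]].
have fE : f = (f@_0%MM)%:MP.
  apply/mpolyP => m; rewrite mcoeffC.
  case: (eqVneq m 0%MM) => [->|m0]; first by rewrite mulr1.
  rewrite mulr0; apply/eqP; rewrite mcoeff_eq0; apply/negP => ms.
  by have := tr _ _ _ (hlm _ ms m0) (pos _ m0); rewrite irr.
have c0 : f@_0%MM != 0 by rewrite -mcoeff_msupp.
have -> : (1 : P) = (f@_0%MM)^-1 *: f.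
  by rewrite {2}fE -mul_mpolyC -rmorphM mulVf.
exact: IZ.
Qed.

Definition vec2poly (B : seq M) (v : 'cV[K]_(size B)) : P :=
  \sum_(k < size B) v k 0 *: 'X_[nth 0%MM B k].
Arguments vec2poly : clear implicits.

Lemma vec2polyB B u v : vec2poly B (u - v) = vec2poly B u - vec2poly B v.
Proof.
rewrite /vec2poly -sumrB; apply: eq_bigr => k _; by rewrite !mxE scalerBl.
Qed.

Lemma vec2poly_lin B (m : nat) (a : 'I_m -> K) (u : 'I_m -> 'cV_(size B)) :
  vec2poly B (\sum_(i < m) a i *: u i) = \sum_(i < m) a i *: vec2poly B (u i).
Proof.
rewrite /vec2poly.
under eq_bigr do rewrite summxE scaler_suml.
rewrite exchange_big /=; apply: eq_bigr => i _.
rewrite scaler_sumr; apply: eq_bigr => k _; by rewrite !mxE scalerA.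
Qed.

Lemma stdI m : standard lt I m -> ~ I 'X_[m].
Proof.
move=> st h; apply: st; exists 'X_[m]; split => //.
  by rewrite -msupp_eq0 msuppX.
by split; rewrite msuppX ?inE // => m'; rewrite inE => ->.
Qed.

Lemma L2 B : canonical_basis lt I B -> forall v, I (vec2poly B v) -> v = 0.
Proof.
case: (Hlt) => irr tr _ _ _.
case=> srt HB v Iv.
have uB : uniq B by apply: sorted_uniq srt.
have coefE m : (vec2poly B v)@_m = \sum_(k < size B) v k 0 * (nth 0%MM B k == m)%:R.
  rewrite /vec2poly (big_morph (mcoeff m) (@mcoeffD _ _ m) (@mcoeff0 _ _ m)); apply: eq_bigr => k _; by rewrite mcoeffZ mcoeffX.
have f0 : vec2poly B v = 0.
  apply/eqP; apply/negP => /negP nz.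
  have [m [ms hm]] := lm_exists nz.
  have : m \in B.
    move: ms; rewrite mcoeff_msupp coefE => /eqP h.
    apply/negP => mB; apply: h; apply: big1 => k _.
    case: eqP => [e|]; last by rewrite mulr0.
    by move: mB; rewrite -e mem_nth.
  move/HB => st; apply: st; exists (vec2poly B v); split => //.
apply/matrixP => k j; rewrite (ord1 j) mxE.
have := congr1 (mcoeff (nth 0%MM B k)) f0; rewrite coefE mcoeff0.
rewrite (bigD1 k) //= eqxx mulr1 big1 ?addr0 // => i ik.
by rewrite nth_uniq // (inj_eq val_inj) (negbTE ik) mulr0.
Qed.

Lemma B0 B : canonical_basis lt I B -> I (1 - vec2poly B (e1 K (size B))).
Proof.
case: (Hlt) => irr tr _ _ pos.
case: B => [|b B'] [srt HB].
  rewrite /vec2poly big_ord0 subr0; apply: one_in_I => st.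
  by have := (proj2 (HB 0%MM) st).
have bst : standard lt I b by apply/HB; rewrite inE eqxx.
have st0 : standard lt I 0%MM.
  case: (classic (standard lt I 0%MM)) => // /one_in_I h.
  by case: (stdI bst); rewrite -[ 'X_[b]]mulr1; apply: IM.
have h0 := proj2 (HB 0%MM) st0.
have b0 : b = 0%MM.
  case: (eqVneq b 0%MM) => // bne.
  have l0b := pos _ bne.
  move: h0; rewrite inE eq_sym (negbTE bne) /= => h0.
  have := order_path_min tr srt; move/allP => /(_ _ h0) lb0.
  by have := tr _ _ _ lb0 l0b; rewrite irr.
rewrite /vec2poly big_ord_recl /= b0 mpolyX0 !mxE /= scale1r big1 ?addr0 ?subrr.
  exact: I0.
by move=> i _; rewrite !mxE /= scale0r.
Qed.

Variables (B : seq M) (T : 'M[K]_(size B)).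
Hypothesis HB : canonical_basis lt I B.
Hypothesis HT : mult_matrix I B 'X_ord0 T.

Lemma Lpow i : I ('X_ord0 ^+ i - vec2poly B (T ^+ i *m e1 K (size B))).
Proof.
elim: i => [|i IH].
  by rewrite expr0 mul1mx; apply: B0.
set v := T ^+ i *m _ in IH.
have -> : T ^+ i.+1 *m e1 K (size B) = T *m v by rewrite exprS -mulmxE mulmxA.
have key : vec2poly B (T *m v) =
    \sum_(j < size B) v j 0 *: \sum_(k < size B) T k j *: 'X_[nth 0%MM B k].
  rewrite /vec2poly.
  under eq_bigr do rewrite mxE scaler_suml.
  rewrite exchange_big /=; apply: eq_bigr => j _.
  rewrite scaler_sumr; apply: eq_bigr => k _; by rewrite scalerA mulrC.
have key2 : \sum_(j < size B) v j 0 *: ('X_[nth 0%MM B j] * 'X_ord0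
      - \sum_(k < size B) T k j *: 'X_[nth 0%MM B k])
    = vec2poly B v * 'X_ord0 - vec2poly B (T *m v).
  rewrite key /vec2poly mulr_suml -sumrB; apply: eq_bigr => j _.
  by rewrite scalerBr scalerAl.
have -> : 'X_ord0 ^+ i.+1 - vec2poly B (T *m v) =
   ('X_ord0 ^+ i - vec2poly B v) * 'X_ord0 +
   (vec2poly B v * 'X_ord0 - vec2poly B (T *m v)).
  by rewrite exprSr mulrBl addrA subrK.
apply: ID; first exact: IMr.
rewrite -key2; apply: Isum => j; apply: IZ; exact: HT.
Qed.

Lemma L1 q : I (poly_x1 n q - vec2poly B (poly_mx T q *m e1 K (size B))).
Proof.
rewrite /poly_x1 /poly_mx mulmx_suml.
rewrite (eq_bigr (fun i : 'I_(size q) => q`_i *: (T ^+ i *m e1 K (size B)))); last first.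
  by move=> i _; rewrite scalemxAl.
rewrite vec2poly_lin -sumrB; apply: Isum => i.
rewrite -scalerBr; apply: IZ; exact: Lpow.
Qed.

Lemma L12 q : I (poly_x1 n q) <-> poly_mx T q *m e1 K (size B) = 0.
Proof.
split => [h|h].
  apply: (L2 HB); have := L1 q.
  move=> h2; have := IB h h2; by rewrite opprB addrC subrK.
by have := L1 q; rewrite h /vec2poly big1 ?subr0 // => k _; rewrite mxE scale0r.
Qed.
End Gen.

Lemma poly_x1E (K : fieldType) (n : nat) (p : {poly K}) :
  poly_x1 n p = horner_alg ('X_ord0 : {mpoly K[n.+1]}) p.
Proof.
rewrite /poly_x1 /horner_alg /= /horner_morph.
rewrite horner_coef size_map_poly.
by apply: eq_bigr => i _; rewrite coef_map /= mulr_algl.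
Qed.

Lemma poly_x1D (K : fieldType) (n : nat) (p q : {poly K}) :
  poly_x1 n (p + q) = poly_x1 n p + poly_x1 n q.
Proof. by rewrite !poly_x1E rmorphD. Qed.
Lemma poly_x1B (K : fieldType) (n : nat) (p q : {poly K}) :
  poly_x1 n (p - q) = poly_x1 n p - poly_x1 n q.
Proof. by rewrite !poly_x1E rmorphB. Qed.
Lemma poly_x1M (K : fieldType) (n : nat) (p q : {poly K}) :
  poly_x1 n (p * q) = poly_x1 n p * poly_x1 n q.
Proof. by rewrite !poly_x1E rmorphM. Qed.
Lemma poly_x1Z (K : fieldType) (n : nat) (c : K) (q : {poly K}) :
  poly_x1 n (c *: q) = c *: poly_x1 n q.
Proof. by rewrite -mul_polyC poly_x1M !poly_x1E horner_algC mulr_algl. Qed.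
Lemma poly_x11 (K : fieldType) (n : nat) : poly_x1 n (1 : {poly K}) = 1.
Proof. by rewrite !poly_x1E rmorph1. Qed.
Lemma poly_x10 (K : fieldType) (n : nat) : poly_x1 n (0 : {poly K}) = 0.
Proof. by rewrite !poly_x1E rmorph0. Qed.
Lemma poly_x1X (K : fieldType) (n : nat) : poly_x1 n ('X : {poly K}) = 'X_ord0.
Proof. by rewrite !poly_x1E horner_algX. Qed.

Lemma shapeL (K : fieldType) (n : nat) (I : {mpoly K[n.+1]} -> Prop) :
  is_ideal I -> shape_position I -> forall p, exists q, I (p - poly_x1 n q).
Proof.
move=> HI [f [Hgen _ _ _]].
set S := fun p : {mpoly K[n.+1]} => exists q, I (p - poly_x1 n q).
have S0 : S 0 by exists 0; rewrite poly_x10 subrr; apply: I0.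
have S1 : S 1 by exists 1; rewrite poly_x11 subrr; apply: I0.
have SD p1 p2 : S p1 -> S p2 -> S (p1 + p2).
  move=> [q1 h1] [q2 h2]; exists (q1 + q2); rewrite poly_x1D opprD addrACA.
  exact: ID.
have SM p1 p2 : S p1 -> S p2 -> S (p1 * p2).
  move=> [q1 h1] [q2 h2]; exists (q1 * q2); rewrite poly_x1M.
  have -> : p1 * p2 - poly_x1 n q1 * poly_x1 n q2 =
     (p1 - poly_x1 n q1) * p2 + poly_x1 n q1 * (p2 - poly_x1 n q2).
    by rewrite mulrBl mulrBr addrA subrK.
  by apply: ID => //; [apply: IMr | apply: IM].
have SZ c p : S p -> S (c *: p).
  move=> [q h]; exists (c *: q); rewrite poly_x1Z -scalerBr; exact: IZ.
have SX i : S 'X_i.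
  case: (eqVneq i ord0) => [->|i0].
    by exists 'X; rewrite poly_x1X subrr; apply: I0.
  exists (f i); apply/Hgen.
  set G := [seq _ | _ <- _].
  have Hi : (i < size G)%N by rewrite size_map size_enum_ord.
  exists (fun j : 'I_(size G) => ((j : nat) == i)%:R).
  rewrite (bigD1 (Ordinal Hi)) //= eqxx mul1r big1 ?addr0.
    rewrite (nth_map ord0) ?size_enum_ord // nth_ord_enum.
    by rewrite (negbTE i0).
  move=> j ji; suff -> : ((j : nat) == i) = false by rewrite mul0r.
  apply/negbTE; apply: contra ji => /eqP e; apply/eqP; exact: val_inj.
have SXm m : S 'X_[m].
  rewrite mpolyXE_id; elim/big_ind: _ => //.
  move=> i _; elim: (m i) => [|k IH]; first by rewrite expr0.
  by rewrite exprS; apply: SM.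
elim/mpolyind => // c m p _ _ Sp; apply: SD => //; exact: SZ.
Qed.

Lemma poly_mx_wide (K : fieldType) (m N : nat) (A : 'M[K]_m) (p : {poly K}) :
  (size p <= N)%N -> poly_mx A p = \sum_(i < N) p`_i *: A ^+ i.
Proof.
move=> h; rewrite /poly_mx (big_ord_widen N (fun i => p`_i *: A ^+ i) h).
rewrite big_mkcond /=; apply: eq_bigr => i _.
by case: ltnP => // hi; rewrite nth_default // scale0r.
Qed.

Definition cf (K : fieldType) (d : nat) (c : 'rV[K]_d) (i : nat) : K :=
  if (insub i : option 'I_d) is Some j then c 0 j else 0.
Lemma cfE (K : fieldType) (d : nat) (c : 'rV[K]_d) (j : 'I_d) : cf c j = c 0 j.
Proof. by rewrite /cf valK. Qed.

Unset Implicit Arguments.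
Theorem lemma3p5 (K : fieldType) (n : nat)
    (I : {mpoly K[n.+1]} -> Prop) (lt1 : rel 'X_{1..n.+1})
    (B : seq 'X_{1..n.+1}) (T1 : 'M[K]_(size B)) (w : 'cV[K]_(size B))
    (ft : {poly K})
    (B2 : seq 'X_{1..n.+1}) (T2 : 'M[K]_(size B2)) :
  is_ideal I ->
  term_order lt1 ->
  canonical_basis lt1 I B ->
  shape_position I ->
  mult_matrix I B 'X_ord0 T1 ->
  T1 \in unitmx ->
  min_poly_seq (fun i => (w^T *m (T1 ^+ i) *m e1 K (size B)) 0 0) ft ->
  canonical_basis lt1 (ideal_add1 I (poly_x1 n ft)) B2 ->
  mult_matrix (ideal_add1 I (poly_x1 n ft)) B2 'X_ord0 T2 ->
  size B2 = (size ft).-1 /\ min_poly_vec T2 (e1 K (size B2)) ft.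
Proof.
move=> HI Hlt HB HS HT1 _ Hmin HB2 HT2.
set g := poly_x1 n ft in HB2 HT2 *.
set J := ideal_add1 I g in HB2 HT2 *.
have HJ : is_ideal J.
  split.
  - by exists 0, 0; split; [exact: I0 | rewrite mul0r addr0].
  - move=> p q [a [b [Ia ->]]] [a' [b' [Ia' ->]]].
    exists (a + a'), (b + b'); split; first exact: ID.
    by rewrite mulrDl addrACA.
  - move=> p q [a [b [Ia ->]]]; exists (p * a), (p * b); split; first exact: IM.
    by rewrite mulrDr mulrA.
have IJ p : I p -> J p by move=> Ip; exists p, 0; rewrite mul0r addr0.
have [Hmonic Hdiv] := Hmin.
have ft0 : ft != 0 by apply: monic_neq0.
have divI q : I (poly_x1 n q) -> ft %| q.
  move=> /(L12 HI Hlt HB HT1) hq; apply/Hdiv => i.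
  have E : w^T *m T1 ^+ i *m (poly_mx T1 q *m e1 K (size B)) =
      \sum_(k < size q) q`_k *: (w^T *m T1 ^+ (i + k) *m e1 K (size B)).
    rewrite /poly_mx mulmx_suml mulmx_sumr; apply: eq_bigr => k _.
    by rewrite -scalemxAl -scalemxAr exprD -mulmxE !mulmxA.
  move: E; rewrite hq mulmx0 => /(congr1 (fun M : 'M[K]_(1,1) => M 0 0)); rewrite mxE summxE /= => h.
  apply: (etrans _ (esym h)); apply: eq_bigr => k _. by rewrite [RHS]mxE.
have divJ q : J (poly_x1 n q) <-> ft %| q.
  split.
    move=> [a [b [Ia E]]]; have [b' Hb'] := shapeL HI HS b.
    have : I (poly_x1 n (q - b' * ft)).
      rewrite poly_x1B poly_x1M -/g E.
      have -> : a + b * g - poly_x1 n b' * g = a + (b - poly_x1 n b') * g.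
        by rewrite mulrBl addrA.
      by apply: ID => //; apply: IMr.
    move/divI => h.
    by rewrite -(subrK (b' * ft) q); apply: dvdp_add => //; apply: dvdp_mull.
  move/dvdpP => [r ->]; exists 0, (poly_x1 n r); rewrite add0r poly_x1M; split => //.
  exact: I0.
have vecE q : poly_mx T2 q *m e1 K (size B2) = 0 <-> ft %| q.
  by rewrite -(L12 HJ Hlt HB2 HT2) divJ.
have Hvec : min_poly_vec T2 (e1 K (size B2)) ft.
  split => //; first by apply/vecE.
  move=> q qm /vecE h; apply: dvdp_leq => //; exact: monic_neq0.
split => //.
set d := (size ft).-1.
have sft : size ft = d.+1 by rewrite /d prednK // size_poly_gt0.
set m := size B2.
pose Kr : 'M[K]_(d, m) := \matrix_(i < d, k < m) (T2 ^+ i *m e1 K m) k 0.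
have KrE (c : 'rV[K]_d) :
    c *m Kr = (poly_mx T2 (\poly_(i < d) cf c i) *m e1 K m)^T.
  rewrite (poly_mx_wide _ (size_poly _ _)) mulmx_suml.
  apply/matrixP => a k; rewrite (ord1 a) !mxE summxE.
  apply: eq_bigr => i _; rewrite !mxE coef_poly ltn_ord cfE.
  rewrite big_distrr; apply: eq_bigr => j _ /=; rewrite mulrA; congr (_ * _); by rewrite [RHS]mxE.
have inj (c : 'rV[K]_d) : c *m Kr = 0 -> c = 0.
  rewrite KrE => /(congr1 trmx); rewrite trmxK trmx0 => /vecE h.
  have p0 : \poly_(i < d) cf c i = 0.
    apply/eqP; apply/negP => /negP nz.
    have := dvdp_leq nz h; rewrite sft.
    by have := size_poly d (cf c) => /leq_ltn_trans H /H; rewrite ltnn.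
  apply/matrixP => a i; rewrite (ord1 a) mxE.
  by have := congr1 (fun p : {poly K} => p`_i) p0; rewrite coef_poly ltn_ord coef0 cfE.
have ker0 : kermx Kr = 0.
  apply/row_matrixP => i; rewrite row0; apply: inj.
  by rewrite -row_mul mulmx_ker row0.
have le1 : (d <= m)%N.
  have := mxrank_ker Kr; rewrite ker0 mxrank0 => /esym /eqP; rewrite subn_eq0.
  move/leq_trans; apply; exact: rank_leq_col.
have surj (j : 'I_m) : exists c : 'rV[K]_d, c *m Kr == row j 1%:M.
  have [q Hq] := shapeL HI HS 'X_[nth 0%MM B2 j].
  set r := q %% ft.
  have sr : (size r <= d)%N by rewrite -ltnS -sft ltn_modp.
  have Jr : J ('X_[nth 0%MM B2 j] - poly_x1 n r).
    have -> : 'X_[nth 0%MM B2 j] - poly_x1 n r =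
        ('X_[nth 0%MM B2 j] - poly_x1 n q) + poly_x1 n (q %/ ft * ft).
      have qE : poly_x1 n q = poly_x1 n (q %/ ft * ft) + poly_x1 n r.
        by rewrite -poly_x1D -divp_eq.
      by rewrite qE opprD addrA addrAC subrK.
    apply: (ID HJ); first exact: IJ.
    by apply/divJ; apply: dvdp_mull.
  have := ID HJ Jr (L1 HJ Hlt HB2 HT2 r); rewrite addrA subrK.
  have -> : 'X_[nth 0%MM B2 j] = @vec2poly K n B2 (row j 1%:M)^T.
    rewrite /vec2poly (bigD1 j) //= !mxE eqxx scale1r big1 ?addr0 // => k kj.
    by rewrite !mxE eq_sym (negbTE kj) scale0r.
  rewrite -vec2polyB => /(L2 Hlt HB2) /eqP; rewrite subr_eq0 => /eqP E.
  exists (\row_(i < d) r`_i); rewrite KrE.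
  have -> : \poly_(i < d) cf (\row_(i < d) r`_i) i = r.
    apply/polyP => i; rewrite coef_poly; case: ltnP => hi.
      by rewrite -[i]/(val (Ordinal hi)) cfE mxE.
    by rewrite nth_default // (leq_trans sr hi).
  by apply/eqP; rewrite -E trmxK.
have le2 : (m <= d)%N.
  pose X : 'M[K]_(m, d) := \matrix_(j < m) (xchoose (surj j)).
  have XK : X *m Kr = 1%:M.
    apply/row_matrixP => j; rewrite row_mul rowK; exact: (eqP (xchooseP (surj j))).
  have := mxrankM_maxr X Kr; rewrite XK mxrank1 => /leq_trans; apply.
  exact: rank_leq_row.
by apply/eqP; rewrite eqn_leq le1 le2.
Qed.
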